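(* Let $\mathcal{I}=(N,M,\mathcal{V})$ be a fair division instance with additive valuations, let $\epsilon\ge 0$, and let $\mathcal{I}'=(N',M',\mathcal{V}')=\mathtt{reduce}(\mathcal{I},\epsilon)$. Then for every agent $i\in N'$, $\mathrm{MMS}_i(\mathcal{I}')=\mathrm{MMS}^{|N'|}_{v'_i}(M')\ge 1-4\epsilon$.
   Context: An instance $(N,M,\mathcal{V})$ has agents $N=[n]$, a finite set $M$ of $m$ indivisible goods, and additive valuations $v_i:2^M\to\mathbb{R}_{\ge0}$. For a valuation $v$, a set $S$ and integer $d\ge1$, $\mathrm{MMS}^d_v(S)$ is the maximum over all partitions $(P_1,\dots,P_d)$ of $S$ into $d$ bundles of $\min_j v(P_j)$; $\mathrm{MMS}_i=\mathrm{MMS}^{n}_{v_i}(M)$. An instance is ordered if $M=[m]$ and $v_i(1)\ge v_i(2)\ge\dots\ge v_i(m)$ for every agent $i$. For $\mathcal{I}=([n],[m],\mathcal{V})$, $\mathtt{order}(\mathcal{I})=([n],[m],\mathcal{V}')$ where $v'_i(j)$ is the $j$-th largest number in the multiset $\{v_i(g):g\in[m]\}$. Reduction rules for an ordered instance with $n$ agents and threshold $\alpha$: $R^\alpha_1$ is applicable if some agent $i$ has $v_i(\{1\})\ge\alpha$; $R^\alpha_2$ if some $i$ has $v_i(\{2n-1,2n,2n+1\})\ge\alpha$; $R^\alpha_3$ if some $i$ has $v_i(\{3n-2,3n-1,3n,3n+1\})\ge\alpha$; $R^\alpha_4$ if some $i$ has $v_i(\{1,2n+1\})\ge\alpha$.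 Applying the rule gives the corresponding set to such an agent $i$ and removes $i$ and these goods; the remaining goods are re-indexed $1,2,\dots$ preserving their order (so the instance remains ordered). $\mathtt{reduce}(\mathcal{I},\epsilon)$: (1) replace $\mathcal{I}$ by $\mathtt{order}(\mathcal{I})$; (2) for every agent $i$ and good $g$ set $v_i(g)\leftarrow v_i(g)/\mathrm{MMS}_i$ (so every agent's MMS value becomes $1$); (3) while one of $R^{3/4+\epsilon}_1,R^{3/4+\epsilon}_2,R^{3/4+\epsilon}_3,R^{3/4+\epsilon}_4$ is applicable, apply $R^{3/4+\epsilon}_k$ for the smallest applicable $k$. The output is the instance formed by the remaining agents, remaining goods and the valuations from step (2). *)

(* Defs.v *)
From mathcomp Require Import all_boot all_order all_algebra.
Set Implicit Arguments. Unset Strict Implicit. Unset Printing Implicit Defensive.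
Import Order.TTheory GRing.Theory Num.Theory.
Local Open Scope ring_scope.

(* Goods are represented by natural numbers (original indices of the ordered
   instance, 0-based); a set of goods is a duplicate-free seq G of goods. *)

Definition bundle_val {R : numDomainType} (v : nat -> R) (G : seq nat) (d : nat)
  (f : {ffun 'I_(size G) -> 'I_d}) (j : 'I_d) : R :=
  \sum_(p < size G | f p == j) v (nth 0%N G p).

(* MMS^d_v(G) = max over partitions (P_1..P_d) of G of min_j v(P_j).
   The seeds (0 for max, v(G) for min) are neutral for nonnegative v and d >= 1. *)
Definition MMSd {R : realDomainType} (d : nat) (v : nat -> R) (G : seq nat) : R :=
  \big[Num.max/0]_(f : {ffun 'I_(size G) -> 'I_d})
     \big[Num.min/ \sum_(g <- G) v g]_(j < d) bundle_val v f j.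

(* order(I): v'_i(j) = the (j+1)-th largest value of agent i (0-based j);
   0 for j >= m. *)
Definition ordv {R : realDomainType} (n m : nat) (v : 'I_n -> 'I_m -> R)
  (i : 'I_n) (j : nat) : R :=
  nth 0 (sort (fun x y : R => y <= x) [seq v i g | g <- enum 'I_m]) j.

Definition normv {R : realFieldType} (n m : nat) (v : 'I_n -> 'I_m -> R)
  (i : 'I_n) (j : nat) : R :=
  ordv v i j / MMSd n (ordv v i) (iota 0 m).

(* 0-based positions used by rule R_k when there are na agents:
   R1: {1}; R2: {2na-1,2na,2na+1}; R3: {3na-2,..,3na+1}; R4: {1,2na+1}. *)
Definition rule_pos (k na : nat) : seq nat :=
  match k with
  | 1 => [:: 0]
  | 2 => [:: (2 * na - 2); (2 * na - 1); (2 * na)]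
  | 3 => [:: (3 * na - 3); (3 * na - 2); (3 * na - 1); (3 * na)]
  | 4 => [:: 0; (2 * na)]
  | _ => [::]
  end%N.

(* the goods at these positions among the remaining goods G (listed in order);
   a missing position yields the dummy good m, which has value 0. *)
Definition rule_goods (m : nat) (G : seq nat) (k na : nat) : seq nat :=
  [seq nth m G p | p <- rule_pos k na].

Definition rule_val {R : numDomainType} (n m : nat) (w : 'I_n -> nat -> R)
  (A : seq 'I_n) (G : seq nat) (k : nat) (i : 'I_n) : R :=
  \sum_(g <- rule_goods m G k (size A)) w i g.

Definition applicable {R : numDomainType} (n m : nat) (alpha : R)
  (w : 'I_n -> nat -> R) (A : seq 'I_n) (G : seq nat) (k : nat) : Prop :=
  exists2 i, i \in A & alpha <= rule_val m w A G k i.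

Definition red_step {R : numDomainType} (n m : nat) (alpha : R)
  (w : 'I_n -> nat -> R) (A : seq 'I_n) (G : seq nat)
  (A' : seq 'I_n) (G' : seq nat) : Prop :=
  exists k i,
    [/\ (1 <= k <= 4)%N,
        (forall k', (1 <= k' < k)%N -> ~ applicable m alpha w A G k'),
        i \in A, alpha <= rule_val m w A G k i &
        (A' = rem i A /\
         G' = [seq g <- G | g \notin rule_goods m G k (size A)])].

Inductive red_reach {R : numDomainType} (n m : nat) (alpha : R)
  (w : 'I_n -> nat -> R) (A0 : seq 'I_n) (G0 : seq nat) :
  seq 'I_n -> seq nat -> Prop :=
| red_refl : red_reach m alpha w A0 G0 A0 G0
| red_next : forall A G A' G', red_reach m alpha w A0 G0 A G ->
    red_step m alpha w A G A' G' -> red_reach m alpha w A0 G0 A' G'.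

(* (A, G) is a possible output of reduce(I, eps): remaining agents A and
   remaining goods G (original indices of order(I)), valuations normv v. *)
Definition reduce_output {R : realFieldType} (n m : nat) (v : 'I_n -> 'I_m -> R)
  (eps : R) (A : seq 'I_n) (G : seq nat) : Prop :=
  red_reach m (3 / 4 + eps) (normv v) (enum 'I_n) (iota 0 m) A G /\
  (forall k, (1 <= k <= 4)%N -> ~ applicable m (3 / 4 + eps) (normv v) A G k).

(* Main.v *)
Require Import Defs.
From mathcomp Require Import all_boot all_order all_algebra.
From mathcomp Require Import zify.
From mathcomp.algebra_tactics Require Import ring lra.
Import Order.TTheory GRing.Theory Num.Theory.
Local Open Scope ring_scope.
Set Implicit Arguments. Unset Strict Implicit. Unset Printing Implicit Defensive.

Section Inv.
Variables (R : realFieldType) (w : nat -> R) (alpha : R).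
Hypothesis w_ge0 : forall g, 0 <= w g.

Definition pv (G : seq nat) (s p : nat -> nat) (j q : nat) : R :=
  \sum_(g <- G | (s g == j) && (p g == q)) w g.

Definition goodb G s p (k : nat -> nat) j : Prop :=
  [/\ (k j <= 3)%N, 1 - (k j)%:R * (alpha / 3) <= pv G s p j 0 &
      forall q, (1 <= q <= k j)%N -> 1 - alpha <= pv G s p j q].

Definition InvEx na G s p k B : Prop :=
  (forall g, g \in G -> (s g < na)%N) /\
  (forall j, (j < na)%N -> j != B -> goodb G s p k j).

Definition Inv na G := exists s p k, InvEx na G s p k na.

Lemma sum_le_sub (G : seq nat) (P Q : pred nat) :
  (forall g, g \in G -> P g -> Q g) ->
  \sum_(g <- G | P g) w g <= \sum_(g <- G | Q g) w g.
Proof.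
move=> PQ; rewrite (big_mkcond P) (big_mkcond Q) big_seq [X in _ <= X]big_seq.
apply: ler_sum => g gG; case: ifP => Pg; first by rewrite (PQ g gG Pg).
by case: ifP.
Qed.

Lemma drop_ok na G (X : seq nat) s p k B : (1 < na)%N -> (B < na)%N -> InvEx na G s p k B ->
  (forall g, g \in G -> g \in X -> s g = B) -> Inv na.-1 [seq g <- G | g \notin X].
Proof.
move=> na1 Bn [lab gd] XB.
pose t := if B == 0%N then 1%N else 0%N.
pose rl r := if r == na.-1 then B else r.
pose s' g := rl (if s g == B then t else s g).
pose p' g := if s g == B then 0%N else p g.
pose k' j := if j == B then k na.-1 else k j.
have tn : (t < na)%N by rewrite /t; case: ifP => _; lia.
have tB : t != B by rewrite /t; case: (B =P 0%N) => [->|/eqP]; lia.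
exists s', p', k'; split.
  move=> g; rewrite mem_filter => /andP[_ gG].
  have sn := lab g gG; rewrite /s' /rl.
  case: (s g =P B) => [sgB|/eqP sgB].
    by case: (t =P na.-1) => [te|/eqP te]; move: tB tn Bn; lia.
  by case: (s g =P na.-1) => [te|/eqP te]; move: sgB sn Bn; lia.
move=> j jn _.
pose j' := if j == B then na.-1 else j.
have j'n : (j' < na)%N by rewrite /j'; case: ifP => _; lia.
have j'B : j' != B by rewrite /j'; case: ifP => [/eqP jB|/negbT jB]; move: jB jn Bn; lia.
have [k3 h0 hq] := gd j' j'n j'B.
have kk : k' j = k j' by rewrite /k' /j'; case: ifP.
have pvm q : pv G s p j' q <= pv [seq g <- G | g \notin X] s' p' j q.
  rewrite /pv big_filter_cond; apply: sum_le_sub => g gG /andP[/eqP sg /eqP pg].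
  have sgB : s g != B by rewrite sg.
  have gX : g \notin X by apply/negP => /(XB g gG) /eqP; rewrite (negbTE sgB).
  rewrite gX /= /p' /s' (negbTE sgB) pg eqxx andbT /rl sg /j'.
  case: (j =P B) => [->|/eqP jB]; first by rewrite eqxx.
  by case: ifP => // /eqP; lia.
split; first by rewrite kk.
  by rewrite kk; apply: le_trans h0 (pvm 0%N).
by move=> q; rewrite kk => /hq h; apply: le_trans h (pvm q).
Qed.


Definition tr (x a g : nat) : nat := if g == x then a else if g == a then x else g.

Lemma trK x a : involutive (tr x a).
Proof.
move=> g; rewrite /tr; case: (g =P x) => [->|/eqP gx].
  by rewrite eqxx; case: (a =P x) => [->|_] //; rewrite eqxx.
case: (g =P a) => [->|/eqP ga]; first by rewrite eqxx.
by rewrite (negbTE gx) (negbTE ga).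
Qed.

Lemma tr_mem (G : seq nat) x a g : x \in G -> a \in G -> (tr x a g \in G) = (g \in G).
Proof.
move=> xG aG; rewrite /tr; case: (g =P x) => [->|_]; first by rewrite xG aG.
by case: (g =P a) => [->|_]; rewrite ?xG ?aG.
Qed.

Lemma perm_tr (G : seq nat) x a : uniq G -> x \in G -> a \in G ->
  perm_eq (map (tr x a) G) G.
Proof.
move=> uG xG aG; apply: uniq_perm => //.
  by rewrite map_inj_uniq //; apply: can_inj (trK x a).
move=> y; apply/mapP/idP => [[z zG ->]|yG]; first by rewrite tr_mem.
by exists (tr x a y); rewrite ?tr_mem ?trK.
Qed.

Lemma swap_ok na G s p k B x a : uniq G -> x \in G -> a \in G -> s a = B ->
  s x != B -> w x <= w a -> InvEx na G s p k B ->
  InvEx na G (s \o tr x a) (p \o tr x a) k B.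
Proof.
move=> uG xG aG saB sxB wxa [lab gd]; split.
  by move=> g gG /=; apply: lab; rewrite tr_mem.
move=> j jn jB; have [k3 h0 hq] := gd j jn jB.
have pvm q : pv G s p j q <= pv G (s \o tr x a) (p \o tr x a) j q.
  rewrite /pv -[X in _ <= X](perm_big _ (perm_tr uG xG aG)) big_map /=.
  rewrite [X in _ <= X](eq_bigl (fun g => (s g == j) && (p g == q))); last by move=> g; rewrite trK.
  apply: ler_sum => g /andP[/eqP sgj _].
  rewrite /tr; case: (g =P x) => [->|_] //.
  case: (g =P a) => [gaE|_] //.
  by move: jB; rewrite -sgj gaE saB eqxx.
split => //; first by apply: le_trans h0 (pvm 0%N).
by move=> q /hq h; apply: le_trans h (pvm q).
Qed.


Lemma count_swap1 (L : seq nat) (P P' : pred nat) x : uniq L -> x \in L ->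
  (forall y, y \in L -> y != x -> P' y = P y) -> P x -> ~~ P' x ->
  count P L = (count P' L).+1.
Proof.
elim: L => [|y L IH] //= /andP[yL uL]; rewrite inE => xL hPP Px nP'x.
case: (x =P y) => [xy|/eqP xy].
  subst y; rewrite Px (negbTE nP'x) /= add1n add0n; congr _.+1.
  apply: eq_in_count => z zL; apply/esym; apply: hPP; first by rewrite inE zL orbT.
  by apply/negP => /eqP zx; move: yL; rewrite -zx zL.
have xL' : x \in L by move: xL; rewrite (negbTE xy) orFb.
have hL : forall z, z \in L -> z != x -> P' z = P z.
  by move=> z zL zx; apply: hPP; rewrite ?inE ?zL ?orbT.
rewrite (IH uL xL' hL Px nP'x) hPP ?inE ?eqxx // 1?eq_sym //.
by rewrite addnS.
Qed.


Lemma exch na G (Ys Xs : seq nat) s p k B : uniq G -> uniq Xs -> uniq Ys ->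
  {subset Xs <= G} -> {subset Ys <= G} -> (forall y, y \in Ys -> y \notin Xs) ->
  (forall y x, y \in Ys -> x \in Xs -> w x <= w y) ->
  InvEx na G s p k B ->
  (count (fun g => s g != B) Xs <= count (fun g => s g == B) Ys)%N ->
  exists s' p', InvEx na G s' p' k B /\ forall x, x \in Xs -> s' x = B.
Proof.
move=> uG uX uY XG YG YX wYX.
move e : (count (fun g => s g != B) Xs) => n.
elim: n s p e => [|n IH] s p e inv cnt.
  exists s, p; split => // x xX; apply/eqP; apply: negbNE.
  apply/negP => nB; move/eqP: e; rewrite -leqn0 leqNgt -has_count.
  by move/negP; apply; apply/hasP; exists x.
have /hasP[x xX sxB] : has (fun g => s g != B) Xs by rewrite has_count e.
have /hasP[a aY /eqP saB] : has (fun g => s g == B) Ys.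
  by rewrite has_count; apply: (leq_trans _ cnt).
have xa : x != a by apply/eqP => xaE; move: (YX a aY); rewrite -xaE xX.
have inv' := swap_ok (uG) (XG x xX) (YG a aY) saB sxB (wYX a x aY xX) inv.
have hc : count (fun g => s g != B) Xs =
    (count (fun g => (s \o tr x a) g != B) Xs).+1.
  apply: (count_swap1 (x:=x)) => //; last by rewrite /= /tr eqxx saB negbK.
  move=> y yX yx; rewrite /= /tr (negbTE yx).
  by case: (y =P a) => [yaE|] //; move: (YX a aY); rewrite -yaE yX.
have hc2 : count (fun g => s g == B) Ys =
    (count (fun g => (s \o tr x a) g == B) Ys).+1.
  apply: (count_swap1 (x:=a)) => //.
  - move=> y yY ya; rewrite /= /tr (negbTE ya).
    by case: (y =P x) => [yxE|] //; move: (YX y yY); rewrite yxE xX.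
  - by rewrite saB.
  - rewrite /= /tr eqxx; case: (a =P x) => [axE|_] //.
    by move: xa; rewrite axE eqxx.
apply: (IH _ _ _ inv'); first by apply: eq_add_S; rewrite -e hc.
by move: cnt; rewrite hc2.
Qed.


Lemma count_ltS (L : seq nat) (s : nat -> nat) c :
  count (fun g => (s g < c.+1)%N) L = (count (fun g => (s g < c)%N) L + count (fun g => s g == c) L)%N.
Proof.
elim: L => //= g L ->.
case: (ltnP (s g) c) => h.
  by rewrite (leqW h) (ltn_eqF h) /=; lia.
rewrite ltnS.
case: (s g =P c) => [->|/eqP ne]; first by rewrite leqnn /=; lia.
have -> : (s g <= c)%N = false by apply/negbTE; rewrite -ltnNge ltn_neqAle eq_sym ne h.
by rewrite /=; lia.
Qed.

Lemma pigeon na (L : seq nat) (s : nat -> nat) : (0 < na)%N ->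
  (forall g, g \in L -> (s g < na)%N) ->
  exists2 B, (B < na)%N & (size L <= count (fun g => s g == B) L * na)%N.
Proof.
case: na => [|na'] // _ lab.
pose M := \max_(B < na'.+1) count (fun g => s g == nat_of_ord B) L.
have step c : (c <= na'.+1)%N -> (count (fun g => (s g < c)%N) L <= c * M)%N.
  elim: c => [|c IH] cn; first by rewrite (@eq_count _ _ pred0) ?count_pred0.
  rewrite count_ltS mulSn addnC; apply: leq_add; last by apply: IH; lia.
  exact: (@leq_bigmax _ (fun B : 'I_na'.+1 => count (fun g => s g == nat_of_ord B) L) (Ordinal cn)).
have [B0 eB0] := @bigop.eq_bigmax _ (fun B : 'I_na'.+1 => count (fun g => s g == nat_of_ord B) L) (ltac:(by rewrite card_ord)).
exists (nat_of_ord B0) => //.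
have := step _ (leqnn _).
rewrite (@eq_in_count _ _ predT) ?count_predT; last by move=> g /lab.
by rewrite /M eB0 mulnC.
Qed.


Lemma sum_D1 (G : seq nat) (P : pred nat) y : uniq G -> y \in G ->
  \sum_(x <- G | P x) w x = \sum_(x <- G | P x && (x != y)) w x + (if P y then w y else 0).
Proof.
move=> uG yG; rewrite big_mkcond (bigD1_seq y) //= addrC; congr (_ + _).
by rewrite [RHS]big_mkcond [LHS]big_mkcond; apply: eq_bigr => x _; case: (P x); case: (x != y).
Qed.

Lemma sum_ge0 (G : seq nat) (P : pred nat) : 0 <= \sum_(x <- G | P x) w x.
Proof. by apply: sumr_ge0 => x _; apply: w_ge0. Qed.


Lemma r4a_ok na G s p k h g : uniq G -> h \in G -> g \in G -> s g != s h ->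
  w h < alpha -> w g <= alpha / 3 -> 0 <= alpha -> InvEx na G s p k na ->
  exists s' p' k', [/\ InvEx na G s' p' k' (s h), s' h = s h & s' g = s h].
Proof.
move=> uG hG gG sgh whA wgA a0 [lab gd].
have hg : h != g by apply/eqP => E; move: sgh; rewrite E eqxx.
have j0n := lab h hG; have k0n := lab g gG.
move: sgh j0n k0n; set j0 := s h; set k0 := s g => sgh j0n k0n.
have k0j0 : (k0 == j0) = false by apply/negbTE.
set K := k k0.
set c := (p g == 0%N) && (K < 3)%N.
set q := if c then K.+1 else p g.
pose s' x := if x == g then j0 else if (s x == j0) && (x != h) then k0 else s x.
pose p' x := if (s x == j0) && (x != h) && (x != g) then q else p x.
pose k' j := if (j == k0) && c then K.+1 else k j.
pose S := \sum_(x <- G | (s x == j0) && (x != h)) w x.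
have S_ge : 1 - alpha <= S.
  have j0na : j0 != na by rewrite neq_ltn j0n.
  have [K03 h0 hq] := gd j0 j0n j0na.
  have hsplit r : pv G s p j0 r = \sum_(x <- G | ((s x == j0) && (p x == r)) && (x != h)) w x
      + (if (s h == j0) && (p h == r) then w h else 0) by exact: sum_D1.
  have hSge r : \sum_(x <- G | ((s x == j0) && (p x == r)) && (x != h)) w x <= S.
    by apply: sum_le_sub => x _ /andP[/andP[-> _] ->].
  case: (k j0 =P 0%N) => [K0|/eqP K0].
    move: h0; rewrite K0 mul0r subr0 (hsplit 0%N) => h0.
    have : (if (s h == j0) && (p h == 0%N) then w h else 0) <= w h.
      by case: ifP => _ //; apply: w_ge0.
    by have := hSge 0%N; lra.
  pose r' := if p h == 0%N then 1%N else 0%N.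
  have phr : (p h == r') = false by rewrite /r'; case: (p h =P 0%N) => [->|/eqP] //; lia.
  have : 1 - alpha <= pv G s p j0 r'.
    rewrite /r'; case: ifP => _; first by apply: hq; lia.
    apply: le_trans h0; rewrite lerD2l lerN2.
    have : (k j0)%:R <= 3 :> R by rewrite (ler_nat R (k j0) 3).
    by move=> hk3; have := ler_wpM2r (x := alpha / 3) (ltac:(lra)) hk3; lra.
  rewrite hsplit phr andbF addr0 => h1.
  by apply: le_trans h1 (hSge r').
pose T r := \sum_(x <- G | ((s x == k0) && (p x == r)) && (x != g)) w x.
have j0k0 : (j0 == k0) = false by rewrite eq_sym.
have E1 r : pv G s' p' k0 r = T r + (if q == r then S else 0).
  rewrite /pv (bigID (fun x => s x == j0)) /= addrC; congr (_ + _).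
    apply: eq_bigl => x; rewrite /s' /p'.
    case: (x =P g) => [->|/eqP xg]; first by rewrite eqxx j0k0 /= andbF.
    rewrite /= ?andbT; case: (s x =P j0) => [sxj|/eqP sxj].
      by rewrite ?sxj ?eqxx ?j0k0 /= ?andbF.
    by rewrite ?(negbTE sxj) /= ?andbT.
  case: (q =P r) => [qr|/eqP qr].
    rewrite /S; apply: eq_bigl => x; rewrite /s' /p'.
    case: (x =P g) => [->|/eqP xg]; first by rewrite ?eqxx ?j0k0 ?k0j0 /=.
    rewrite /= ?andbT; case: (s x =P j0) => [sxj|/eqP sxj]; last first.
      by rewrite ?(negbTE sxj) /= ?andbF.
    rewrite ?sxj ?eqxx /=; case: (x =P h) => [->|/eqP xh]; first by rewrite ?eqxx /= ?j0k0.
    by rewrite ?xh /= ?eqxx ?qr ?eqxx.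
  rewrite big_pred0 // => x; rewrite /s' /p'.
  case: (x =P g) => [->|/eqP xg]; first by rewrite ?eqxx ?j0k0 ?k0j0 /=.
  rewrite /= ?andbT; case: (s x =P j0) => [sxj|/eqP sxj]; last first.
    by rewrite ?(negbTE sxj) /= ?andbF.
  rewrite ?sxj ?eqxx /=; case: (x =P h) => [->|/eqP xh]; first by rewrite ?eqxx /= ?j0k0.
  by rewrite ?xh /= ?eqxx ?(negbTE qr).
have E2 r : pv G s p k0 r = T r + (if p g == r then w g else 0).
  by rewrite /pv (sum_D1 _ uG gG) /= eqxx.
have T0 r : 0 <= T r by apply: sum_ge0.
exists s', p', k'; split.
- split.
    move=> x xG; rewrite /s'; case: ifP => _ //; case: ifP => _ //; exact: lab.
  move=> j jn jj0.
  have jna : j != na by rewrite neq_ltn jn.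
  have [K3 h0 hq] := gd j jn jna.
  case: (j =P k0) => [jk0|/eqP jk0].
    subst j; have kk : k' k0 = if c then K.+1 else K by rewrite /k' eqxx.
    rewrite /goodb kk; case cE : c.
    + have [pg0 K3'] : p g = 0%N /\ (K < 3)%N by move: cE; rewrite /c => /andP[/eqP -> ->].
      have qE : q = K.+1 by rewrite /q cE.
      split => //.
        rewrite E1 qE /= addr0; move: h0; rewrite E2 pg0 eqxx.
        by rewrite /K -[(k k0).+1%:R]natr1 mulrDl mul1r => h1; lra.
      move=> r /andP[r1 rK]; rewrite E1 qE.
      case: (K.+1 =P r) => [_|/eqP Kr].
        by have := T0 r; lra.
      rewrite addr0; have := hq r; rewrite E2 pg0.
      have -> : (0 == r)%N = false by apply/negbTE; lia.
      by rewrite addr0 => ->; lia.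
    + have qE : q = p g by rewrite /q cE.
      split => //.
        rewrite E1 qE; case: (p g =P 0%N) => [pg0|/eqP pg0].
          have K3e : K = 3%N by move: cE; rewrite /c pg0 eqxx /=; move: K3; rewrite /K; lia.
          have := T0 0%N; rewrite K3e; lra.
        by move: h0; rewrite E2 (negbTE pg0) !addr0 /K.
      move=> r rK; rewrite E1 qE; case: (p g =P r) => [pgr|/eqP pgr].
        by have := T0 r; lra.
      by rewrite addr0; have := hq r rK; rewrite E2 (negbTE pgr) addr0.
  have kk : k' j = k j by rewrite /k' (negbTE jk0).
  have jj0' : (j0 == j) = false by rewrite eq_sym; apply/negbTE.
  have jk0' : (k0 == j) = false by rewrite eq_sym; apply/negbTE.
  have pvE r : pv G s' p' j r = pv G s p j r.
    apply: eq_bigl => x; rewrite /s' /p'; case: (x =P g) => [->|/eqP xg].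
      by rewrite ?eqxx /= ?jj0' ?jk0'.
    rewrite /= ?andbT; case: (s x =P j0) => [sxj|/eqP sxj] /=.
      case: (x =P h) => [->|/eqP xh] //=.
      by rewrite ?sxj ?jj0' ?jk0'.
    by [].
  by split; rewrite kk ?pvE //; move=> r /hq; rewrite pvE.
- rewrite /s'; case: (h =P g) => [hgE|_]; first by move: hg; rewrite hgE eqxx.
  by rewrite /= ?eqxx /= ?andbF.
- by rewrite /s' eqxx.
Qed.


Lemma InvEx_any na G s p k B : InvEx na G s p k na -> InvEx na G s p k B.
Proof. by move=> [lab gd]; split => // j jn _; apply: gd => //; rewrite neq_ltn jn. Qed.

Lemma exdrop na G m t0 r : sorted ltn G -> (forall g, g \in G -> (g < m)%N) ->
  (forall a b, (a <= b)%N -> w b <= w a) -> (1 < na)%N ->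
  (forall c, (size (take t0 G) + size (take r (drop t0 G)) <= c * na)%N ->
     (size (take r (drop t0 G)) <= c)%N) ->
  Inv na G -> Inv na.-1 [seq g <- G | g \notin [seq nth m G q | q <- iota t0 r]].
Proof.
move=> sG Gm wmon na1 ar [s [p [k inv]]].
have uG : uniq G := sorted_uniq ltn_trans ltnn sG.
set Ys := take t0 G; set Xs := take r (drop t0 G).
have [lab _] := inv.
have YG : {subset Ys <= G} by move=> y /mem_take.
have XG : {subset Xs <= G} by move=> x /mem_take /mem_drop.
have labL : forall g, g \in Ys ++ Xs -> (s g < na)%N.
  by move=> g; rewrite mem_cat => /orP[/YG|/XG]; apply: lab.
have [B Bn hB] := @pigeon na (Ys ++ Xs) s (ltnW na1) labL.
have hc := ar _ (leq_trans (eq_leq (esym (size_cat Ys Xs))) hB).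
rewrite count_cat in hc.
have cX : (count (fun g => s g == B) Xs + count (fun g => s g != B) Xs)%N = size Xs.
  by rewrite -(count_predC (fun g => s g == B)).
have cnt : (count (fun g => s g != B) Xs <= count (fun g => s g == B) Ys)%N.
  have hc2 : (size Xs <= count (fun g => s g == B) Ys + count (fun g => s g == B) Xs)%N := hc.
  by move: cX hc2; lia.
have pw : pairwise ltn G by rewrite -sorted_pairwise //; apply: ltn_trans.
have pw2 : pairwise ltn (take t0 G ++ drop t0 G) by rewrite cat_take_drop.
move: pw2; rewrite pairwise_cat => /and3P[/allrelP ar2 _ _].
have uX : uniq Xs by apply: take_uniq; apply: drop_uniq.
have uY : uniq Ys by apply: take_uniq.
have YX : forall y, y \in Ys -> y \notin Xs.
  move=> y yY; apply/negP => /mem_take yD; have := ar2 y y yY yD; lia.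
have wYX : forall y x, y \in Ys -> x \in Xs -> w x <= w y.
  by move=> y x yY /mem_take xD; apply: wmon; apply: ltnW; apply: ar2.
have [s' [p' [inv' hX]]] := exch uG uX uY XG YG YX wYX (InvEx_any B inv) cnt.
apply: (@drop_ok na G [seq nth m G q | q <- iota t0 r] s' p' k B na1 Bn inv') => g gG /mapP[q]; rewrite mem_iota => /andP[q1 q2] gE.
case: (ltnP q (size G)) => qs; last by move: (Gm g gG); rewrite gE nth_default //; lia.
apply: hX; rewrite gE.
have -> : nth m G q = nth m Xs (q - t0).
  by rewrite /Xs nth_take; [rewrite nth_drop; congr nth; lia | lia].
apply: mem_nth; rewrite /Xs size_take_min size_drop; move: qs; set sg := size G; move=> qs; lia.
Qed.


Lemma step_R1 na G m : (1 < na)%N -> Inv na G ->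
  Inv na.-1 [seq g <- G | g \notin [:: nth m G 0]].
Proof.
move=> na1 [s [p [k inv]]]; have [lab _] := inv.
case: G inv lab => [|h G'] inv lab.
  by apply: (drop_ok (B:=0%N) na1 _ (InvEx_any 0%N inv)) => //; lia.
apply: (drop_ok (B:=s h) na1 (lab h (mem_head _ _)) (InvEx_any _ inv)).
by move=> g _; rewrite inE => /eqP ->.
Qed.

Lemma sorted_wmon G m p q : sorted ltn G -> (forall a b, (a <= b)%N -> w b <= w a) ->
  (p <= q)%N -> (q < size G)%N -> w (nth m G q) <= w (nth m G p).
Proof.
move=> sG wmon pq qs; apply: wmon.
have sG' : sorted leq G by apply: sub_sorted sG => a b /ltnW.
by apply: (sorted_leq_nth leq_trans leqnn) => //; rewrite inE; lia.
Qed.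

Lemma step_R4 na G m : sorted ltn G -> (forall g, g \in G -> (g < m)%N) ->
  (forall a b, (a <= b)%N -> w b <= w a) -> 0 <= alpha -> (1 < na)%N ->
  w (nth m G 0) < alpha ->
  w (nth m G (2 * na - 2)) + w (nth m G (2 * na - 1)) + w (nth m G (2 * na)) < alpha ->
  Inv na G -> Inv na.-1 [seq g <- G | g \notin [:: nth m G 0; nth m G (2 * na)]].
Proof.
move=> sG Gm wmon a0 na1 w1 w2 [s [p [k inv]]]; have [lab _] := inv.
have uG : uniq G := sorted_uniq ltn_trans ltnn sG.
case: G sG Gm w1 w2 inv lab uG => [|h G'] sG Gm w1 w2 inv lab uG.
  by apply: (drop_ok (B:=0%N) na1 _ (InvEx_any 0%N inv)) => //; lia.
set G := h :: G' in sG Gm w1 w2 inv lab uG *.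
have hG : h \in G by apply: mem_head.
set g := nth m G (2 * na).
case: (ltnP (2 * na) (size G)) => [gin|gout]; last first.
  apply: (drop_ok (B:=s h) na1 (lab h hG) (InvEx_any _ inv)) => x xG.
  rewrite !inE => /orP[/eqP -> //|/eqP xg].
  by move: (Gm x xG); rewrite xg /g nth_default //; lia.
have gG : g \in G by apply: mem_nth.
case: (s g =P s h) => [sgh|/eqP sgh].
  apply: (drop_ok (B:=s h) na1 (lab h hG) (InvEx_any _ inv)) => x xG.
  by rewrite !inE => /orP[/eqP -> //|/eqP ->].
have wg : w g <= alpha / 3.
  have l1 : (2 * na - 2 <= 2 * na)%N by lia.
  have l2 : (2 * na - 1 <= 2 * na)%N by lia.
  have := sorted_wmon m sG wmon l1 gin; have := sorted_wmon m sG wmon l2 gin.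
  rewrite -/g; move: w2; rewrite -/g; lra.
have [s' [p' [k' [inv' e1 e2]]]] := r4a_ok uG hG gG sgh w1 wg a0 inv.
apply: (drop_ok (B:=s h) na1 (lab h hG) inv') => x xG.
by rewrite !inE => /orP[/eqP ->|/eqP ->].
Qed.


Lemma sum_parts G s p j K :
  \sum_(q < K) pv G s p j q = \sum_(g <- G | (s g == j) && (p g < K)%N) w g.
Proof.
elim: K => [|K IH]; first by rewrite big_ord0 big_pred0 // => g; rewrite ltn0 andbF.
rewrite big_ord_recr /= IH [RHS](bigID (fun g => p g < K)%N) /=; congr (_ + _).
  apply: eq_bigl => g; case: (s g == j) => //=.
  by case h: (p g < K)%N; rewrite ?andbF ?andbT //= ltnS ltnW.
rewrite /pv; apply: eq_bigl => g; case: (s g == j) => //=.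
rewrite ltnS leq_eqVlt; case: (p g =P K) => [->|_]; first by rewrite ltnn.
by case: (p g < K)%N.
Qed.

Lemma bundle_ge na G s p k j eps : alpha = 3 / 4 + eps -> 0 <= eps ->
  InvEx na G s p k na -> (j < na)%N ->
  1 - 4 * eps <= \sum_(g <- G | s g == j) w g.
Proof.
move=> aE e0 [lab gd] jn.
have jna : j != na by rewrite neq_ltn jn.
have [k3 h0 hq] := gd j jn jna.
set K := k j in k3 h0 hq.
have h1 : \sum_(q < K.+1) pv G s p j q <= \sum_(g <- G | s g == j) w g.
  by rewrite sum_parts; apply: sum_le_sub => g _ /andP[].
have h2 : K%:R * (1 - alpha) <= \sum_(q < K) pv G s p j q.+1.
  have := @ler_sum _ _ (index_enum 'I_K) xpredT (fun _ => 1 - alpha) (fun q : 'I_K => pv G s p j q.+1).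
  rewrite sumr_const card_ord mulr_natl; apply => q _; apply: hq; have := ltn_ord q; lia.
move: h1; rewrite big_ord_recl /= => h1.
have hK : K%:R <= 3 :> R by rewrite (ler_nat R K 3).
have hK0 : 0 <= K%:R :> R by [].
move: h0 h1 h2; rewrite aE => h0 h1 h2.
have : \sum_(i < K) pv G s p j (bump 0 i) = \sum_(q < K) pv G s p j q.+1 by [].
move=> e; rewrite e in h1.
nra.
Qed.


Lemma Inv_MMS na G eps : (0 < na)%N -> alpha = 3 / 4 + eps -> 0 <= eps ->
  Inv na G -> 1 - 4 * eps <= MMSd na w G.
Proof.
case: na => [|na'] // _ aE e0 [s [p [k inv]]].
have [lab _] := inv.
pose f := [ffun q : 'I_(size G) => (inord (s (nth 0%N G q)) : 'I_na'.+1)].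
have bv (j : 'I_na'.+1) : bundle_val w f j = \sum_(g <- G | s g == j) w g.
  rewrite /bundle_val (big_nth 0%N) big_mkord; apply: eq_bigl => q.
  rewrite ffunE -val_eqE /= inordK //.
  have := lab (nth 0%N G q) (mem_nth 0%N (ltn_ord q)); lia.
apply: le_trans (le_bigmax _ _ f).
apply/bigmin_geP; split.
  apply: le_trans (bundle_ge aE e0 inv (ltn0Sn na')) _.
  by apply: sum_le_sub.
by move=> j _; rewrite bv; apply: bundle_ge aE e0 inv (ltn_ord j).
Qed.

End Inv.

Section Ord.
Variables (R : realFieldType) (n m : nat) (v : 'I_n -> 'I_m -> R).
Hypothesis v_ge0 : forall i g, 0 <= v i g.

Lemma ordv_ge0 i j : 0 <= ordv v i j.
Proof.
rewrite /ordv; case: (ltnP j (size (sort (fun x y : R => y <= x) [seq v i g | g <- enum 'I_m]))) => js.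
  have : nth 0 (sort (fun x y : R => y <= x) [seq v i g | g <- enum 'I_m]) j \in
      [seq v i g | g <- enum 'I_m] by rewrite -(mem_sort (fun x y : R => y <= x)) mem_nth.
  by move=> /mapP[g _ ->].
by rewrite nth_default.
Qed.

Lemma ordv_mon i a b : (a <= b)%N -> ordv v i b <= ordv v i a.
Proof.
move=> ab; rewrite /ordv.
set S := sort _ _.
have sS : sorted (fun x y : R => y <= x) S.
  by apply: sort_sorted => x y; apply: le_total.
case: (ltnP b (size S)) => bs; last first.
  by rewrite [X in X <= _]nth_default //; apply: (ordv_ge0 i a).
have tr : transitive (fun x y : R => y <= x) by move=> x y z /= h1 h2; apply: le_trans h1.
have rf : reflexive (fun x y : R => y <= x) by move=> x /=.
have ain : a \in [pred k | (k < size S)%N] by rewrite inE; apply: leq_ltn_trans bs.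
have bin : b \in [pred k | (k < size S)%N] by rewrite inE.
exact: (sorted_leq_nth tr rf 0 sS a b ain bin ab).
Qed.

Lemma ordv_out i j : (m <= j)%N -> ordv v i j = 0.
Proof. by move=> mj; rewrite /ordv nth_default // size_sort size_map size_enum_ord. Qed.

End Ord.

Lemma init_Inv (R : realFieldType) d m (u : nat -> R) alpha :
  0 < MMSd d u (iota 0 m) ->
  Inv (fun g => u g / MMSd d u (iota 0 m)) alpha d (iota 0 m).
Proof.
move=> mu0; set mu := MMSd d u (iota 0 m).
pose F (f : {ffun 'I_(size (iota 0 m)) -> 'I_d}) :=
  \big[Num.min/ \sum_(g <- iota 0 m) u g]_(j < d) bundle_val u f j.
have [f hf] : exists f, mu <= F f.
  case: (boolP [exists f, mu <= F f]) => [/existsP[f hf]|/existsPn hn]; first by exists f.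
  have : mu < mu.
    rewrite {2}/mu /MMSd; apply/bigmax_ltP; split => // f _.
    by rewrite ltNge; apply: hn.
  by rewrite ltxx.
have hj j : mu <= bundle_val u f j by move: hf => /bigmin_geP[_ ->].
pose s x := if @insub _ (fun k => (k < size (iota 0 m))%N) 'I_(size (iota 0 m)) x is Some q
  then nat_of_ord (f q) else 0%N.
exists s, (fun _ => 0%N), (fun _ => 0%N); split.
  move=> g; rewrite mem_iota add0n /= => gm; rewrite /s.
  case: insubP => [q _ _|]; first exact: ltn_ord.
  by rewrite size_iota gm.
move=> j jd _; split => //; last by move=> q; lia.
rewrite mul0r subr0 /pv.
have -> : \sum_(g <- iota 0 m | (s g == j) && (0 == 0)%N) (u g / mu) =
    bundle_val u f (Ordinal jd) / mu.
  rewrite /bundle_val mulr_suml (big_nth 0%N) big_mkord; apply: eq_big => q.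
    have qm : (q < m)%N := leq_trans (ltn_ord q) (eq_leq (size_iota 0 m)).
    rewrite andbT /s -val_eqE /=.
    have -> : nth 0%N (iota 0 m) q = nat_of_ord q by rewrite nth_iota ?add0n.
    by rewrite valK.
  by [].
by rewrite ler_pdivlMr // mul1r.
Qed.

Lemma arith2 na sG c : (0 < na)%N ->
  (minn (2*na-2) sG + minn 3 (sG - (2*na-2)) <= c * na)%N -> (minn 3 (sG - (2*na-2)) <= c)%N.
Proof.
move=> h1 h2; case: (leqP (2*na-2) sG) => h3.
  have e1 : minn (2*na-2) sG = (2*na-2)%N by lia.
  rewrite e1 in h2; case: (leqP 3 (sG - (2*na-2))) => h4.
    have e2 : minn 3 (sG - (2*na-2)) = 3%N by lia.
    rewrite e2 in h2 *; nia.
  have e2 : minn 3 (sG - (2*na-2)) = (sG - (2*na-2))%N by lia.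
  rewrite e2 in h2 *; nia.
have e2 : minn 3 (sG - (2*na-2)) = 0%N by lia.
by rewrite e2.
Qed.

Lemma arith3 na sG c : (0 < na)%N ->
  (minn (3*na-3) sG + minn 4 (sG - (3*na-3)) <= c * na)%N -> (minn 4 (sG - (3*na-3)) <= c)%N.
Proof.
move=> h1 h2; case: (leqP (3*na-3) sG) => h3.
  have e1 : minn (3*na-3) sG = (3*na-3)%N by lia.
  rewrite e1 in h2; case: (leqP 4 (sG - (3*na-3))) => h4.
    have e2 : minn 4 (sG - (3*na-3)) = 4%N by lia.
    rewrite e2 in h2 *; nia.
  have e2 : minn 4 (sG - (3*na-3)) = (sG - (3*na-3))%N by lia.
  rewrite e2 in h2 *; nia.
have e2 : minn 4 (sG - (3*na-3)) = 0%N by lia.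
by rewrite e2.
Qed.

Theorem theorem13 (R : realFieldType) (n m : nat) (v : 'I_n -> 'I_m -> R) (eps : R) :
  (forall i g, 0 <= v i g) ->
  (forall i, 0 < MMSd n (ordv v i) (iota 0 m)) ->
  0 <= eps ->
  forall (A : seq 'I_n) (G : seq nat), reduce_output v eps A G ->
  forall i, i \in A -> 1 - 4 * eps <= MMSd (size A) (normv v i) G.
Proof.
move=> v0 mpos e0 A G [hr hna] i iA.
set w := normv v i.
set alpha := 3 / 4 + eps.
have mu0 := mpos i.
have w0 : forall g, 0 <= w g.
  by move=> g; rewrite /w /normv; apply: divr_ge0; [apply: ordv_ge0 | apply: ltW].
have wmon : forall a b, (a <= b)%N -> w b <= w a.
  move=> a b ab; rewrite /w /normv; apply: ler_wpM2r; first by rewrite invr_ge0 ltW.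
  exact: ordv_mon.
have a0 : 0 <= alpha by rewrite /alpha; lra.
have key : forall A' G', red_reach m alpha (normv v) (enum 'I_n) (iota 0 m) A' G' ->
    [/\ sorted ltn G', (forall g, g \in G' -> (g < m)%N) &
        (i \in A' -> Inv w alpha (size A') G')].
  move=> A' G'; elim => [|A1 G1 A2 G2 _ [so Gm IH] st].
    split; first exact: iota_ltn_sorted.
      by move=> g; rewrite mem_iota.
    by move=> _; rewrite size_enum_ord; apply: init_Inv.
  case: st => k [i0 [/andP[k1 k4] napp i0A hi0 [eA eG]]].
  subst A2 G2.
  split; first by apply: sorted_filter so; apply: ltn_trans.
    by move=> g; rewrite mem_filter => /andP[_]; apply: Gm.
  move=> iA2.
  have iA1 : i \in A1 by move: iA2; apply: mem_rem.
  rewrite size_rem //.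
  have na1 : (1 < size A1)%N.
    have sr := size_rem i0A.
    have : (0 < size (rem i0 A1))%N by case: (rem i0 A1) iA2.
    by rewrite sr; case: (size A1) => [|[|kk]].
  have Inv1 := IH iA1.
  have nap k' : (1 <= k' < k)%N -> rule_val m (normv v) A1 G1 k' i < alpha.
    move=> hk; rewrite ltNge; apply/negP => h; apply: (napp k' hk); exists i => //.
  move: k1 k4 napp nap; set na := size A1 => k1 k4 napp nap.
  clear hi0; case: k k1 k4 napp nap => [|[|[|[|[|k]]]]] // _ _ napp nap.
  -
    by rewrite /rule_goods /rule_pos /=; apply: step_R1.
  -
    have -> : rule_goods m G1 2 na = [seq nth m G1 q | q <- iota (2 * na - 2) 3].
      rewrite /rule_goods /rule_pos /=.
      have -> : (2 * na - 2).+1 = (2 * na - 1)%N by lia.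
      by have -> : (2 * na - 1).+1 = (2 * na)%N by lia.
    apply: (exdrop w0 so Gm wmon na1 _ Inv1) => c.
    by rewrite !size_take_min size_drop; apply: arith2; lia.
  -
    have -> : rule_goods m G1 3 na = [seq nth m G1 q | q <- iota (3 * na - 3) 4].
      rewrite /rule_goods /rule_pos /=.
      have -> : (3 * na - 3).+1 = (3 * na - 2)%N by lia.
      have -> : (3 * na - 2).+1 = (3 * na - 1)%N by lia.
      by have -> : (3 * na - 1).+1 = (3 * na)%N by lia.
    apply: (exdrop w0 so Gm wmon na1 _ Inv1) => c.
    by rewrite !size_take_min size_drop; apply: arith3; lia.
  -
    have h1 := nap 1%N isT; have h2 := nap 2%N isT.
    move: h1 h2; rewrite /rule_val /rule_goods /rule_pos /= !big_cons big_nil !addr0 addrA.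
    move=> h1 h2; exact: (step_R4 w0 so Gm wmon a0 na1 h1 h2 Inv1).
have [so Gm inv] := key A G hr.
apply: (Inv_MMS w0 _ _ e0 (inv iA)) => //.
by case: (A) iA.
Qed.
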